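(* Let $t$ be an $\mathrm{SL}_2$-tiling and $n$ a positive integer. For each fixed $i\in\mathbb{Z}$ there are only finitely many $j\in\mathbb{Z}$ with $t_{ij}=n$, and for each fixed $j\in\mathbb{Z}$ there are only finitely many $i\in\mathbb{Z}$ with $t_{ij}=n$.
   Context: An $\mathrm{SL}_2$-tiling is a map $t:\mathbb{Z}\times\mathbb{Z}\to\{1,2,3,\dots\}$, $(i,j)\mapsto t_{ij}$, with $t_{ij}t_{i+1,j+1}-t_{i,j+1}t_{i+1,j}=1$ for all $i,j$. *)

(* Defs.v *)
From Stdlib Require Import ZArith List.
Open Scope Z_scope.

Definition SL2_tiling (t : Z -> Z -> Z) : Prop :=
  (forall i j, 1 <= t i j) /\
  (forall i j, t i j * t (i+1) (j+1) - t i (j+1) * t (i+1) j = 1).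

Definition Zfinite (P : Z -> Prop) : Prop :=
  exists l : list Z, forall x, P x -> In x l.

(* Main.v *)
Require Import Defs.
From Stdlib Require Import ZArith List Lia Classical.
Open Scope Z_scope.

Lemma Zfinite_sub (P Q : Z -> Prop) :
  Zfinite Q -> (forall x, P x -> Q x) -> Zfinite P.
Proof. intros [l Hl] H. exists l. auto. Qed.

Lemma Zfinite_union (P Q : Z -> Prop) :
  Zfinite P -> Zfinite Q -> Zfinite (fun x => P x \/ Q x).
Proof.
  intros [l1 H1] [l2 H2]. exists (l1 ++ l2). intros x [H|H];
  apply in_or_app; auto.
Qed.

Lemma Zfinite_atmost1 (P : Z -> Prop) :
  (forall j k, P j -> P k -> j = k) -> Zfinite P.
Proof.
  intros H. destruct (classic (exists x, P x)) as [[x Hx]|Hn].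
  - exists (x :: nil). intros y Hy. left. symmetry. auto.
  - exists nil. intros y Hy. exfalso. eauto.
Qed.

Lemma Zfinite_level (P : Z -> Prop) (g : Z -> Z) :
  (forall j k, P j -> P k -> g j = g k -> j = k) ->
  forall m : nat, Zfinite (fun j => P j /\ 1 <= g j <= Z.of_nat m).
Proof.
  intros Hinj m. induction m as [|m IH].
  - exists nil. intros x Hx. lia.
  - apply Zfinite_sub with (fun j => (P j /\ 1 <= g j <= Z.of_nat m) \/
                                     (P j /\ g j = Z.of_nat (S m))).
    + apply Zfinite_union; auto. apply Zfinite_atmost1.
      intros j k [Hj Ej] [Hk Ek]. apply Hinj; auto; congruence.
    + intros x [Hx Hb]. destruct (Z.eq_dec (g x) (Z.of_nat (S m))); [right|left]; split; auto; lia.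
Qed.

Lemma Zfinite_bounded (P : Z -> Prop) (g : Z -> Z) (M : Z) :
  (forall j k, P j -> P k -> g j = g k -> j = k) ->
  (forall j, P j -> 1 <= g j <= M) -> Zfinite P.
Proof.
  intros Hinj Hb.
  apply Zfinite_sub with (fun j => P j /\ 1 <= g j <= Z.of_nat (Z.to_nat M)).
  - apply Zfinite_level; auto.
  - intros x Hx. specialize (Hb x Hx). split; auto. lia.
Qed.

Lemma minor_pos (c a : Z -> Z) :
  (forall j, 1 <= a j) ->
  (forall j, c j * a (j+1) - c (j+1) * a j = 1) ->
  forall j k, j < k -> 1 <= c j * a k - c k * a j.
Proof.
  intros Ha Hd j k Hjk.
  assert (forall d : nat, 1 <= c j * a (j + 1 + Z.of_nat d) - c (j + 1 + Z.of_nat d) * a j).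
  { induction d as [|d IH].
    - rewrite Z.add_0_r. specialize (Hd j). lia.
    - rewrite Nat2Z.inj_succ.
      replace (j + 1 + Z.succ (Z.of_nat d)) with ((j + 1 + Z.of_nat d) + 1) by lia.
      set (k' := j + 1 + Z.of_nat d) in *.
      specialize (Hd k'). pose proof (Ha k'). pose proof (Ha j). pose proof (Ha (k'+1)).
      assert (a k' * (c j * a (k' + 1) - c (k' + 1) * a j)
              = a (k'+1) * (c j * a k' - c k' * a j) + a j) by nia.
      nia. }
  specialize (H (Z.to_nat (k - j - 1))).
  replace (j + 1 + Z.of_nat (Z.to_nat (k - j - 1))) with k in H by lia. exact H.
Qed.

Lemma row_finite (t : Z -> Z -> Z) (n : Z) :
  SL2_tiling t -> forall i, Zfinite (fun j => t i j = n).
Proof.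
  intros [Hpos Hdet] i.
  set (c := t (i-1)). set (a := t i). set (b := t (i+1)).
  assert (Hca : forall j k, j < k -> 1 <= c j * a k - c k * a j).
  { apply minor_pos. - intro; apply Hpos.
    - intro j. unfold c, a. pose proof (Hdet (i-1) j) as H.
      replace (i-1+1) with i in H by lia. lia. }
  assert (Hab : forall j k, j < k -> 1 <= a j * b k - a k * b j).
  { apply minor_pos. - intro; apply Hpos.
    - intro j. unfold b, a. pose proof (Hdet i j) as H. lia. }
  destruct (classic (exists j0, a j0 = n)) as [[j0 Hj0]|Hn].
  2:{ exists nil. intros x Hx. exfalso. apply Hn. exists x. exact Hx. }
  assert (Hn1 : 1 <= n) by (rewrite <- Hj0; apply Hpos).
  apply Zfinite_sub with (fun j => (a j = n /\ j0 <= j) \/ (a j = n /\ j <= j0)).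
  2:{ intros x Hx. fold a in Hx. destruct (Z_le_gt_dec j0 x); [left|right]; split; auto; lia. }
  apply Zfinite_union.
  - apply Zfinite_bounded with c (c j0).
    + intros j k [Hj _] [Hk _] E. destruct (Z.lt_trichotomy j k) as [H|[H|H]]; auto.
      * specialize (Hca j k H). rewrite Hj, Hk, E in Hca. lia.
      * specialize (Hca k j H). rewrite Hj, Hk, E in Hca. lia.
    + intros j [Hj Hle]. split. apply Hpos.
      destruct (Z.eq_dec j0 j). subst; lia.
      specialize (Hca j0 j ltac:(lia)). rewrite Hj, Hj0 in Hca. nia.
  - apply Zfinite_bounded with b (b j0).
    + intros j k [Hj _] [Hk _] E. destruct (Z.lt_trichotomy j k) as [H|[H|H]]; auto.
      * specialize (Hab j k H). rewrite Hj, Hk, E in Hab. lia.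
      * specialize (Hab k j H). rewrite Hj, Hk, E in Hab. lia.
    + intros j [Hj Hle]. split. apply Hpos.
      destruct (Z.eq_dec j0 j). subst; lia.
      specialize (Hab j j0 ltac:(lia)). rewrite Hj, Hj0 in Hab. nia.
Qed.

Theorem proposition6p1 (t : Z -> Z -> Z) (n : Z) :
  SL2_tiling t -> 1 <= n ->
  (forall i : Z, Zfinite (fun j => t i j = n)) /\
  (forall j : Z, Zfinite (fun i => t i j = n)).
Proof.
  intros Ht _. split.
  - apply row_finite; auto.
  - intro j. apply (row_finite (fun x y => t y x) n).
    destruct Ht as [Hp Hd]. split.
    + intros; apply Hp.
    + intros x y. pose proof (Hd y x). lia.
Qed.
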